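(* Let $\rho\in(0,1)$ and $k\ge1$ an integer. Let $\beta_\rho=\frac{\sqrt{1+\rho}-\sqrt{1-\rho}}{\sqrt{1+\rho}+\sqrt{1-\rho}}$, $\rho_1=\frac{2\beta_\rho^k}{1+\beta_\rho^{2k}}$ and $$C_1=\frac{\rho_1}{2\rho^k}\Big(\big(1-\sqrt{1+\rho^2}\big)^k+\big(1+\sqrt{1+\rho^2}\big)^k\Big).$$ Then $\tilde\rho(C_1)\le\rho_1$.
   Context: $\mathbb{R}_k[X]$ denotes real polynomials of degree at most $k$, and $\|p\|_1$ is the sum of absolute values of the coefficients of $p$. For $C\ge1$, $\tilde\rho(C)=\min\{\max_{x\in[0,\rho]}|p(x)| : p\in\mathbb{R}_k[X],\ p(1)=1,\ \|p\|_1\le C\}$. *)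

(* Defs.v *)
From HB Require Import structures.
From mathcomp Require Import all_boot all_order all_algebra.
From mathcomp Require Import all_classical all_reals.
Set Implicit Arguments. Unset Strict Implicit. Unset Printing Implicit Defensive.
Import Order.TTheory GRing.Theory Num.Theory.
Local Open Scope ring_scope.
Local Open Scope classical_set_scope.

Definition norm1 (R : realType) (p : {poly R}) : R :=
  \sum_(i < size p) `|p`_i|.

(* max_{x in [0,rho]} |p(x)| (a max, attained by continuity; written as sup) *)
Definition supnorm (R : realType) (rho : R) (p : {poly R}) : R :=
  sup [set `|p.[x]| | x in `[0, rho]].

Definition admissible (R : realType) (k : nat) (C : R) (p : {poly R}) : Prop :=
  (size p <= k.+1)%N /\ p.[1] = 1 /\ norm1 p <= C.

Definition rho_tilde (R : realType) (k : nat) (rho C : R) : R :=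
  inf [set supnorm rho p | p in admissible k C].

(* Main.v *)
Require Import Defs.
From HB Require Import structures.
From mathcomp Require Import all_boot all_order all_algebra.
From mathcomp Require Import all_classical all_reals.
From mathcomp Require Import ring lra.
Import Order.TTheory GRing.Theory Num.Theory.
Local Open Scope ring_scope.
Set Implicit Arguments. Unset Strict Implicit.

Section S.
Variable R : realType.
Implicit Types p q : {poly R}.

Lemma norm1_widen p N : (size p <= N)%N -> norm1 p = \sum_(i < N) `|p`_i|.
Proof.
move=> hN; rewrite /norm1 (big_ord_widen N (fun i => `|p`_i|) hN) big_mkcond /=.
apply: eq_bigr => i _; case: ifP => // /negbT; rewrite -leqNgt => h.
by rewrite nth_default // normr0.
Qed.

Lemma norm1_ge0 p : 0 <= norm1 p.
Proof. by apply: sumr_ge0 => i _. Qed.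

Lemma norm1D p q : norm1 (p + q) <= norm1 p + norm1 q.
Proof.
pose N := maxn (size p) (size q).
rewrite (@norm1_widen (p + q) N); last first.
  by apply: (leq_trans (size_polyD _ _)).
rewrite (@norm1_widen p N) ?leq_maxl //.
rewrite (@norm1_widen q N) ?leq_maxr //.
rewrite -big_split /=; apply: ler_sum => i _; rewrite coefD; exact: ler_normD.
Qed.

Lemma norm1Z a p : norm1 (a *: p) = `|a| * norm1 p.
Proof.
rewrite (@norm1_widen (a *: p) (size p)); last exact: size_scale_leq.
rewrite /norm1 mulr_sumr; apply: eq_bigr => i _; rewrite coefZ normrM. done.
Qed.

Lemma norm1N p : norm1 (- p) = norm1 p.
Proof. by rewrite -scaleN1r norm1Z normrN normr1 mul1r. Qed.

Lemma norm1X p : norm1 ('X * p) = norm1 p.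
Proof.
rewrite (@norm1_widen ('X * p) (size p).+1); last first.
  rewrite mulrC; apply: (leq_trans (size_polyMleq _ _)); rewrite size_polyX.
  by rewrite addn2.
rewrite big_ord_recl coefXM /= normr0 add0r /norm1; apply: eq_bigr => i _.
by rewrite coefXM.
Qed.

Fixpoint sp (a b : R) n : R * R :=
  if n is n'.+1 then ((sp a b n').2, 2 * a * (sp a b n').2 + b * (sp a b n').1)
  else (1, a).

Fixpoint Pp (c : R) n : {poly R} * {poly R} :=
  if n is n'.+1 then ((Pp c n').2, (2 * c) *: ('X * (Pp c n').2) - (Pp c n').1)
  else (1, c *: 'X).

Lemma Pp_horner c x n :
  ((Pp c n).1.[x], (Pp c n).2.[x]) = sp (c * x) (-1) n.
Proof.
elim: n => [|n IH] /=; first by rewrite hornerC hornerZ hornerX.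
rewrite -IH /=; congr pair.
by rewrite hornerD hornerN hornerZ hornerM hornerX; ring.
Qed.

Lemma Pp_size c n : (size (Pp c n).1 <= n.+1)%N && (size (Pp c n).2 <= n.+2)%N.
Proof.
elim: n => [|n IH] /=.
  rewrite size_poly1 /=; apply: (leq_trans (size_scale_leq _ _)).
  by rewrite size_polyX.
case/andP: IH => h1 h2; rewrite h2 /=.
apply: (leq_trans (size_polyD _ _)); rewrite size_polyN geq_max.
rewrite (leq_trans h1) ?andbT; last by rewrite ltnW // ltnS ltnW.
apply: (leq_trans (size_scale_leq _ _)).
rewrite mulrC; apply: (leq_trans (size_polyMleq _ _)); rewrite size_polyX.
by rewrite addn2.
Qed.

Lemma norm1_1 : norm1 (1 : {poly R}) = 1.
Proof. by rewrite /norm1 size_poly1 big_ord1 coef1 normr1. Qed.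

Lemma Pp_norm1 c n : 0 <= c ->
  norm1 (Pp c n).1 <= (sp c 1 n).1 /\ norm1 (Pp c n).2 <= (sp c 1 n).2.
Proof.
move=> c0; elim: n => [|n [IH1 IH2]] /=.
  rewrite norm1_1 norm1Z -[X in norm1 X]mulr1 norm1X norm1_1.
  by rewrite ger0_norm // mulr1.
split=> //.
apply: (le_trans (norm1D _ _)); rewrite norm1N norm1Z norm1X.
rewrite ger0_norm ?mulr_ge0 // mul1r -mulrA.
by apply: lerD => //; rewrite mulrA; apply: ler_wpM2l; rewrite ?mulr_ge0.
Qed.

Lemma sp_closed a b u v n : u + v = 2 * a -> u * v = - b ->
  sp a b n = ((u ^+ n + v ^+ n) / 2, (u ^+ n.+1 + v ^+ n.+1) / 2).
Proof.
move=> hs hp; have ha : a = (u + v) / 2 by rewrite hs; field.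
have hb : b = - (u * v) by rewrite hp opprK.
elim: n => [|n IH] /=.
  by rewrite !expr0 !expr1 ha; congr pair; field.
rewrite IH /=; congr pair.
by rewrite ha hb !exprS; field.
Qed.

Lemma sp_inv y n :
  (sp y (-1) n).2 ^+ 2 + (sp y (-1) n).1 ^+ 2 - 2 * y * (sp y (-1) n).2 * (sp y (-1) n).1
  = 1 - y ^+ 2.
Proof.
elim: n => [|n IH] /=; first by ring.
rewrite -IH; ring.
Qed.

Lemma sp_one n : sp 1 (-1) n = (1, 1).
Proof. by elim: n => [|n IH] //=; rewrite IH /=; congr pair; ring. Qed.

Lemma sp_bound y n : 0 <= y <= 1 -> `|(sp y (-1) n).1| <= 1.
Proof.
case/andP=> y0 y1; have [->|ylt] := eqVneq y 1; first by rewrite sp_one normr1.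
have {y1} ylt' : y < 1 by rewrite lt_neqAle ylt.
move: (sp y (-1) n) (sp_inv y n) => [e0 e1] /= h.
have h2 : e0 ^+ 2 <= 1.
  have : (1 - y ^+ 2) * (1 - e0 ^+ 2) - (e1 - y * e0) ^+ 2 =
     (1 - y ^+ 2) - (e1 ^+ 2 + e0 ^+ 2 - 2 * y * e1 * e0) by ring.
  rewrite h subrr => /eqP; rewrite subr_eq0 => /eqP eq.
  have hp : 0 < 1 - y ^+ 2 by nra.
  have : 0 <= (1 - y ^+ 2) * (1 - e0 ^+ 2) by rewrite eq sqr_ge0.
  by rewrite pmulr_rge0 // subr_ge0.
by rewrite -(ler_pXn2r (n := 2)) ?nnegrE // expr1n real_normK ?num_real.
Qed.
End S.

Lemma supnorm_ge0 (R : realType) (rho : R) (p : {poly R}) :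
  0 <= rho -> 0 <= supnorm rho p.
Proof.
move=> r0; rewrite /supnorm.
have [hs|hs] := pselect (has_sup [set `|p.[x]| | x in `[0, rho]]%classic).
  apply: (@le_trans _ _ `|p.[0]|) => //.
  apply: ub_le_sup; first by case: hs.
  by exists 0 => //=; rewrite in_itv /= lexx.
by rewrite sup_out.
Qed.

Theorem proposition4 (R : realType) (rho : R) (k : nat)
  (hrho0 : 0 < rho) (hrho1 : rho < 1) (hk : (1 <= k)%N) :
  let beta := (Num.sqrt (1 + rho) - Num.sqrt (1 - rho)) /
              (Num.sqrt (1 + rho) + Num.sqrt (1 - rho)) in
  let rho1 := 2 * beta ^+ k / (1 + beta ^+ (2 * k)) in
  let C1 := rho1 / (2 * rho ^+ k) *
            ((1 - Num.sqrt (1 + rho ^+ 2)) ^+ k + (1 + Num.sqrt (1 + rho ^+ 2)) ^+ k) in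
  rho_tilde k rho C1 <= rho1.
Proof.
suff H : forall beta : R, beta = (Num.sqrt (1 + rho) - Num.sqrt (1 - rho)) /
              (Num.sqrt (1 + rho) + Num.sqrt (1 - rho)) ->
  forall rho1 : R, rho1 = 2 * beta ^+ k / (1 + beta ^+ (2 * k)) ->
  forall C1 : R, C1 = rho1 / (2 * rho ^+ k) *
            ((1 - Num.sqrt (1 + rho ^+ 2)) ^+ k + (1 + Num.sqrt (1 + rho ^+ 2)) ^+ k) ->
  rho_tilde k rho C1 <= rho1.
  by apply: H.
move=> beta Hbeta rho1 Hrho1 C1 HC1.
have [a Ha] : {a : R | a = Num.sqrt (1 + rho)} by eexists.
have [b Hb] : {b : R | b = Num.sqrt (1 - rho)} by eexists.
have [S HS] : {S : R | S = Num.sqrt (1 + rho ^+ 2)} by eexists.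
rewrite -Ha -Hb in Hbeta; rewrite -HS in HC1.
have ha2 : a ^+ 2 = 1 + rho by rewrite Ha sqr_sqrtr // ; lra.
have hb2 : b ^+ 2 = 1 - rho by rewrite Hb sqr_sqrtr // ; lra.
have ha0 : 0 <= a by rewrite Ha; apply: sqrtr_ge0.
have hb0 : 0 <= b by rewrite Hb; apply: sqrtr_ge0.
have hab : b < a by nra.
have hbeta0 : 0 < beta.
  by rewrite Hbeta divr_gt0 //; lra.
set c := rho^-1.
have hc0 : 0 <= c by rewrite invr_ge0 ltW.
have hbsum : beta^-1 + beta = 2 * c.
  rewrite Hbeta /c invf_div.
  have h1 : a - b != 0 by apply/eqP; lra.
  have h2 : a + b != 0 by apply/eqP; lra.
  have h3 : rho != 0 by apply/eqP; lra.
  have key : (a - b) * (a + b) = 2 * rho by rewrite -subr_sqr ha2 hb2; ring.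
  transitivity (2 * (a ^+ 2 + b ^+ 2) / ((a - b) * (a + b))).
    by field; rewrite h2 h1.
  by rewrite ha2 hb2 key; field.
set P := (Pp c k).1.
set E1 := P.[1].
have hE1 : E1 = (beta ^- k + beta ^+ k) / 2.
  rewrite /E1 /P; have := (Pp_horner c) 1 k; rewrite mulr1 => /(congr1 fst) /= ->.
  rewrite (sp_closed (u := beta^-1) (v := beta)) //= ?exprVn //.
  by rewrite opprK mulVf // gt_eqF.
set t := beta ^+ k.
have ht0 : 0 < t by rewrite exprn_gt0.
have hE1pos : 0 < E1 by rewrite hE1 divr_gt0 // addr_gt0 // invr_gt0.
have hr1 : rho1 = E1^-1.
  rewrite Hrho1 hE1 -/t mulnC exprM -/t.
  have : t != 0 by rewrite gt_eqF.
  by move=> tn0; field; rewrite tn0 /=; apply: lt0r_neq0; nra.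
have hS2 : S ^+ 2 = 1 + rho ^+ 2 by rewrite HS sqr_sqrtr //; nra.
have hq : (sp c 1 k).1 = ((1 - S) ^+ k + (1 + S) ^+ k) / (2 * rho ^+ k).
  rewrite (sp_closed (u := (1 + S) / rho) (v := (1 - S) / rho)) /=.
  - rewrite !expr_div_n; field.
    by rewrite expf_neq0 // gt_eqF.
  - by rewrite /c; field; rewrite gt_eqF.
  - transitivity ((1 - S ^+ 2) / rho ^+ 2).
      by field; rewrite gt_eqF.
    by rewrite hS2; field; rewrite gt_eqF.
pose p := E1^-1 *: P.
have hsize := Pp_size c k; case/andP: hsize => hsz _.
have hadm : admissible k C1 p.
  split; first by apply: (leq_trans (size_scale_leq _ _)).
  split; first by rewrite /p hornerZ -/E1 mulVf // gt_eqF.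
  rewrite /p norm1Z HC1 hr1 -mulrA (mulrC (2 * rho ^+ k)^-1) -hq ger0_norm ?invr_ge0 ?(ltW hE1pos) //.
  apply: ler_wpM2l; first by rewrite invr_ge0 ltW.
  by case: (Pp_norm1 k hc0).
have hsup : supnorm rho p <= rho1.
  rewrite /supnorm; apply: ge_sup.
    by exists `|p.[0]|, 0 => //=; rewrite in_itv /= lexx ltW.
  move=> _ [x /= hx <-]; move: hx; rewrite in_itv /= => /andP [x0 xr].
  rewrite /p hornerZ normrM ger0_norm ?invr_ge0 ?(ltW hE1pos) // hr1.
  rewrite -[X in _ <= X]mulr1; apply: ler_wpM2l; first by rewrite invr_ge0 ltW.
  have := (Pp_horner c) x k => /(congr1 fst) /= ->.
  apply: sp_bound; apply/andP; split.
    by rewrite /c mulr_ge0 // invr_ge0 ltW.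
  by rewrite /c mulrC ler_pdivrMr // mul1r.
apply: le_trans hsup.
rewrite /rho_tilde.
have : lbound [set supnorm rho p0 | p0 in admissible k C1]%classic
    (inf [set supnorm rho p0 | p0 in admissible k C1]%classic).
  apply: ge_inf; exists 0 => _ [q _ <-]; apply: supnorm_ge0; exact: ltW.
by apply; exists p.
Qed.
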